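(* Let $H_1$ and $H_2$ be vertex-disjoint connected graphs with $u\in V(H_1)$, $w\in V(H_2)$, where $H_2$ has at least two vertices. Let $k\geqslant 1$ and let $G$ be the graph obtained from $H_1\cup H_2$ by adding the edge $uw$, a new vertex $v$ adjacent to $u$, and $k$ new vertices $v_1,\ldots,v_k$ each adjacent only to $v$. Let $W=N_G(v)\setminus\{u\}=\{v_1,\ldots,v_k\}$ and $$G[v\rightarrow w;2]=G-\{vz: z\in W\}+\{wz: z\in W\}.$$ If $\varepsilon_{H_2}(w)\geqslant\varepsilon_{H_1}(u)$, then $\xi^{ee}(G)<\xi^{ee}(G[v\rightarrow w;2])$.
   Context: All graphs are finite, simple and connected. For a vertex $x$ of a connected graph $G$, $\varepsilon_G(x)$ is the eccentricity of $x$ and $d_G(x)$ its degree; $N_G(v)$ is the neighbourhood of $v$. The total reciprocal edge-eccentricity of $G$ is $\xi^{ee}(G)=\sum_{uv\in E(G)}\left(\frac{1}{\varepsilon_G(u)}+\frac{1}{\varepsilon_G(v)}\right)=\sum_{x\in V(G)}\frac{d_G(x)}{\varepsilon_G(x)}$. *)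

(* Defs.v *)
From mathcomp Require Import all_boot all_order all_algebra.
Set Implicit Arguments. Unset Strict Implicit. Unset Printing Implicit Defensive.
Import Order.TTheory GRing.Theory Num.Theory.

Section Graphs.
Variables (T : finType) (e : rel T).

Definition simple_graph : Prop := symmetric e /\ irreflexive e.
Definition connected_graph : Prop := forall x y : T, connect e x y.

Definition ball (x : T) (k : nat) : {set T} :=
  iter k (fun A : {set T} => A :|: [set y | [exists z in A, e z y]]) [set x].

Definition gdist (x y : T) : nat :=
  find (fun k => y \in ball x k) (iota 0 #|T|).

Definition ecc (x : T) : nat := \max_(y : T) gdist x y.

Definition deg (x : T) : nat := #|[set y | e x y]|.

Definition xi_ee : rat := (\sum_(x : T) (deg x)%:R / (ecc x)%:R)%R.
End Graphs.

(* Construction: vertices of H1, H2, then None = v, Some i = v_i (i < k).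
   [hub] is the vertex the pendant vertices v_i are attached to. *)
Section Construction.
Variables (T1 T2 : finType) (e1 : rel T1) (e2 : rel T2) (k : nat)
          (u : T1) (w : T2).

Definition cV : finType := ((T1 + T2) + option 'I_k)%type.

Definition cedge (hub : cV) (a b : cV) : bool :=
  match a, b with
  | inr (Some _), inr (Some _) => false
  | inr (Some _), _ => b == hub
  | _, inr (Some _) => a == hub
  | inl (inl x), inl (inl y) => e1 x y
  | inl (inr x), inl (inr y) => e2 x y
  | inl (inl x), inl (inr y) => (x == u) && (y == w)
  | inl (inr y), inl (inl x) => (x == u) && (y == w)
  | inl (inl x), inr None => x == u
  | inr None, inl (inl x) => x == u
  | _, _ => false
  end.

Definition G_edge : rel cV := cedge (inr None).
Definition G_moved_edge : rel cV := cedge (inl (inr w)).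
End Construction.

(* Main.v *)
Require Import Defs.
From mathcomp Require Import all_boot all_order all_algebra.
From mathcomp Require Import zify ring lra.
Import Order.TTheory GRing.Theory Num.Theory.
Set Implicit Arguments. Unset Strict Implicit. Unset Printing Implicit Defensive.

Section Gen.
Variables (T : finType) (e : rel T).

Lemma ballS x n : ball e x n.+1 = ball e x n :|: [set y | [exists z in ball e x n, e z y]].
Proof. by []. Qed.

Lemma ball0 x : ball e x 0 = [set x].
Proof. by []. Qed.

Lemma ball_step x n y z : y \in ball e x n -> e y z -> z \in ball e x n.+1.
Proof.
move=> Hy Hyz; rewrite ballS inE; apply/orP; right; rewrite inE.
by apply/existsP; exists y; rewrite Hy Hyz.
Qed.

Lemma ball_sub x n y : y \in ball e x n -> y \in ball e x n.+1.
Proof. by move=> H; rewrite ballS inE H. Qed.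

Lemma ball_trans x y z n m : y \in ball e x n -> z \in ball e y m -> z \in ball e x (n + m).
Proof.
move=> Hy; elim: m z => [|m IH] z.
  by rewrite ball0 inE => /eqP ->; rewrite addn0.
rewrite ballS inE => /orP [/IH H|]; first by rewrite addnS; apply: ball_sub.
rewrite inE => /existsP [z' /andP [/IH Hz' Hz]]; rewrite addnS.
exact: ball_step Hz' Hz.
Qed.

Lemma ball_edge x y : e x y -> y \in ball e x 1.
Proof. by move=> H; apply: (ball_step (y := x)); rewrite // ball0 inE. Qed.

Lemma ball_self x : x \in ball e x 0.
Proof. by rewrite ball0 inE. Qed.

Lemma gdist_max x y : gdist e x y <= #|T|.
Proof. by rewrite /gdist; have := find_size (fun k => y \in ball e x k) (iota 0 #|T|); rewrite size_iota. Qed.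

Lemma gdist_le x y m : y \in ball e x m -> gdist e x y <= m.
Proof.
move=> H; case: (ltnP m #|T|) => Hm; last exact: leq_trans (gdist_max _ _) Hm.
rewrite leqNgt; apply/negP => /(before_find 0); rewrite nth_iota // add0n H.
by [].
Qed.

Lemma gdist_ball x y : gdist e x y < #|T| -> y \in ball e x (gdist e x y).
Proof.
move=> H; have Hh : has (fun k => y \in ball e x k) (iota 0 #|T|).
  by rewrite has_find size_iota.
by have := nth_find 0 Hh; rewrite nth_iota ?add0n // -(size_iota 0 #|T|) -has_find.
Qed.

Lemma gdist_xx x : gdist e x x = 0.
Proof. by apply/eqP; rewrite -leqn0; apply: gdist_le; apply: ball_self. Qed.

Lemma gdist_pos x y : x != y -> 0 < gdist e x y.
Proof.
move=> Hxy; rewrite lt0n; apply/negP => /eqP H0.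
have Hc : 0 < #|T| by apply/card_gt0P; exists x.
have := gdist_ball (x:=x) (y:=y); rewrite H0 => /(_ Hc); rewrite ball0 inE eq_sym.
by rewrite (negbTE Hxy).
Qed.

Lemma gdist_lip x y z : e y z -> gdist e x z <= (gdist e x y).+1.
Proof.
move=> Hyz; case: (ltnP (gdist e x y) #|T|) => H.
  by apply: gdist_le; apply: ball_step (gdist_ball H) Hyz.
exact: leq_trans (gdist_max _ _) (leqW H).
Qed.

Lemma path_ball x p : path e x p -> last x p \in ball e x (size p).
Proof.
elim/last_ind: p => [|p z IH]; first by rewrite /= ball_self.
rewrite rcons_path => /andP [/IH H Hz]; rewrite last_rcons size_rcons.
exact: ball_step H Hz.
Qed.

Lemma conn_lt x y : connected_graph e -> gdist e x y < #|T|.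
Proof.
move=> Hc; have /connectP [p Hp Hy] := Hc x y.
case: (shortenP Hp) Hy => p' Hp' Hu _ Hy.
have Hb := path_ball Hp'; rewrite -Hy in Hb.
apply: leq_ltn_trans (gdist_le Hb) _.
have := max_card (mem (x :: p')); rewrite (card_uniqP Hu) /=. by [].
Qed.

Lemma conn_ball x y : connected_graph e -> y \in ball e x (gdist e x y).
Proof. by move=> Hc; apply: gdist_ball; apply: conn_lt. Qed.

Lemma lip_ball (h : T -> nat) x y m : (forall a b, e a b -> h b <= (h a).+1) ->
  y \in ball e x m -> h y <= h x + m.
Proof.
move=> Hh; elim: m y => [|m IH] y; first by rewrite ball0 inE addn0 => /eqP ->.
rewrite ballS inE => /orP [/IH H|]; first by rewrite addnS; apply: leqW.
rewrite inE => /existsP [z /andP [/IH Hz Hzy]].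
by rewrite addnS; apply: leq_trans (Hh _ _ Hzy) _.
Qed.

Lemma lip_gdist (h : T -> nat) x y : (forall a b, e a b -> h b <= (h a).+1) ->
  gdist e x y < #|T| -> h y <= h x + gdist e x y.
Proof. by move=> Hh H; apply: lip_ball Hh (gdist_ball H). Qed.

Lemma gdist_ecc x y : gdist e x y <= ecc e x.
Proof. exact: (leq_bigmax (F := gdist e x)). Qed.

Lemma ecc_le x m : (forall y, gdist e x y <= m) -> ecc e x <= m.
Proof. by move=> H; apply/bigmax_leqP => y _; apply: H. Qed.

End Gen.

Lemma hom_ball (T T' : finType) (e : rel T) (e' : rel T') (f : T -> T') x y m :
  (forall a b, e a b -> e' (f a) (f b)) -> y \in ball e x m -> f y \in ball e' (f x) m.
Proof.
move=> Hf; elim: m y => [|m IH] y; first by rewrite !ball0 !inE => /eqP ->.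
rewrite ballS inE => /orP [/IH H|]; first exact: ball_sub.
rewrite inE => /existsP [z /andP [/IH Hz Hzy]].
exact: ball_step Hz (Hf _ _ Hzy).
Qed.

Lemma cmp_gdist (T : finType) (e e' : rel T) (h : T -> nat) x z : (forall a b, e a b -> h b <= (h a).+1) ->
  h x = 0 -> gdist e' x z <= h z -> gdist e' x z <= gdist e x z.
Proof.
move=> Hh H0 H; case: (ltnP (gdist e x z) #|T|) => Hl.
  by apply: leq_trans H _; have := lip_gdist Hh Hl; rewrite H0.
exact: leq_trans (gdist_max e' x z) Hl.
Qed.

Section Spec.
Variables (T1 T2 : finType) (e1 : rel T1) (e2 : rel T2) (u : T1) (w : T2) (k : nat).
Hypotheses (C1 : connected_graph e1) (C2 : connected_graph e2) (HT2 : 1 < #|T2|)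
  (Hk : 1 <= k) (He : ecc e1 u <= ecc e2 w).
Notation V := (cV T1 T2 k).
Notation G := (@G_edge T1 T2 e1 e2 k u w).
Notation G' := (@G_moved_edge T1 T2 e1 e2 k u w).
Notation d1 := (gdist e1).
Notation d2 := (gdist e2).
Notation X a := (inl (inl a) : V).
Notation Y a := (inl (inr a) : V).
Notation Vv := (inr None : V).
Notation P i := (inr (Some i) : V).

Definition hV (z : V) : nat := match z with
 | inl (inl x) => 1 + d1 u x | inl (inr y) => 2 + d2 w y | inr None => 0 | inr (Some _) => 1 end.
Definition hX a (z : V) : nat := match z with
 | inl (inl x) => d1 a x | inl (inr y) => d1 a u + 1 + d2 w y | inr None => d1 a u + 1
 | inr (Some _) => d1 a u + 2 end.
Definition hY c (z : V) : nat := match z with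
 | inl (inl x) => d2 c w + 1 + d1 u x | inl (inr y) => d2 c y | inr None => d2 c w + 2
 | inr (Some _) => d2 c w + 3 end.
Definition hP i (z : V) : nat := match z with
 | inl (inl x) => 2 + d1 u x | inl (inr y) => 3 + d2 w y | inr None => 1
 | inr (Some j) => if j == i then 0 else 2 end.

Ltac liptac := first [ by move=> H; have := gdist_lip _ H; lia
 | by case/andP => /eqP -> /eqP ->; rewrite !gdist_xx; lia
 | by move/eqP => ->; rewrite ?gdist_xx; lia
 | by (try case: ifP); lia ].

Lemma hV_lip a b : G a b -> hV b <= (hV a).+1.
Proof.
move: a b => [[a|a]|[j|]] [[b|b]|[j'|]] //=; try liptac.
- by move=> H; have := gdist_lip u H; lia.
- by move=> H; have := gdist_lip w H; lia.
Qed.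
Lemma hX_lip c a b : G a b -> hX c b <= (hX c a).+1.
Proof.
move: a b => [[a|a]|[j|]] [[b|b]|[j'|]] //=; try liptac.
- by move=> H; have := gdist_lip c H; lia.
- by move=> H; have := gdist_lip w H; lia.
Qed.
Lemma hY_lip c a b : G a b -> hY c b <= (hY c a).+1.
Proof.
move: a b => [[a|a]|[j|]] [[b|b]|[j'|]] //=; try liptac.
- by move=> H; have := gdist_lip u H; lia.
- by move=> H; have := gdist_lip c H; lia.
Qed.
Lemma hP_lip c a b : G a b -> hP c b <= (hP c a).+1.
Proof.
move: a b => [[a|a]|[j|]] [[b|b]|[j'|]] //=; try liptac.
- by move=> H; have := gdist_lip u H; lia.
- by move=> H; have := gdist_lip w H; lia.
Qed.

Notation B' := (ball G').
Notation D' := (gdist G').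
Notation D := (gdist G).

Lemma bXX a b : X b \in B' (X a) (d1 a b).
Proof. by apply: (hom_ball (f := fun x => X x)) (conn_ball a b C1). Qed.
Lemma bYY a b : Y b \in B' (Y a) (d2 a b).
Proof. by apply: (hom_ball (f := fun x => Y x)) (conn_ball a b C2). Qed.
Lemma eXuYw : Y w \in B' (X u) 1. Proof. by apply: ball_edge; rewrite /= !eqxx. Qed.
Lemma eYwXu : X u \in B' (Y w) 1. Proof. by apply: ball_edge; rewrite /= !eqxx. Qed.
Lemma eXuV : Vv \in B' (X u) 1. Proof. by apply: ball_edge; rewrite /= !eqxx. Qed.
Lemma eVXu : X u \in B' Vv 1. Proof. by apply: ball_edge; rewrite /= !eqxx. Qed.
Lemma eYwP i : P i \in B' (Y w) 1. Proof. by apply: ball_edge; rewrite /= !eqxx. Qed.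
Lemma ePYw i : Y w \in B' (P i) 1. Proof. by apply: ball_edge; rewrite /= !eqxx. Qed.

Lemma dXY a y : D' (X a) (Y y) <= d1 a u + 1 + d2 w y.
Proof. exact/gdist_le/(ball_trans (ball_trans (bXX a u) eXuYw) (bYY w y)). Qed.
Lemma dXV a : D' (X a) Vv <= d1 a u + 1.
Proof. exact/gdist_le/(ball_trans (bXX a u) eXuV). Qed.
Lemma dXP a i : D' (X a) (P i) <= d1 a u + 1 + 1.
Proof. exact/gdist_le/(ball_trans (ball_trans (bXX a u) eXuYw) (eYwP i)). Qed.
Lemma dYX c x : D' (Y c) (X x) <= d2 c w + 1 + d1 u x.
Proof. exact/gdist_le/(ball_trans (ball_trans (bYY c w) eYwXu) (bXX u x)). Qed.
Lemma dYV c : D' (Y c) Vv <= d2 c w + 1 + 1.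
Proof. exact/gdist_le/(ball_trans (ball_trans (bYY c w) eYwXu) eXuV). Qed.
Lemma dYP c i : D' (Y c) (P i) <= d2 c w + 1.
Proof. exact/gdist_le/(ball_trans (bYY c w) (eYwP i)). Qed.
Lemma dVX x : D' Vv (X x) <= 1 + d1 u x.
Proof. exact/gdist_le/(ball_trans eVXu (bXX u x)). Qed.
Lemma dVY y : D' Vv (Y y) <= 1 + 1 + d2 w y.
Proof. exact/gdist_le/(ball_trans (ball_trans eVXu eXuYw) (bYY w y)). Qed.
Lemma dVP i : D' Vv (P i) <= 1 + 1 + 1.
Proof. exact/gdist_le/(ball_trans (ball_trans eVXu eXuYw) (eYwP i)). Qed.
Lemma dPX i x : D' (P i) (X x) <= 1 + 1 + d1 u x.
Proof. exact/gdist_le/(ball_trans (ball_trans (ePYw i) eYwXu) (bXX u x)). Qed.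
Lemma dPY i y : D' (P i) (Y y) <= 1 + d2 w y.
Proof. exact/gdist_le/(ball_trans (ePYw i) (bYY w y)). Qed.
Lemma dPV i : D' (P i) Vv <= 1 + 1 + 1.
Proof. exact/gdist_le/(ball_trans (ball_trans (ePYw i) eYwXu) eXuV). Qed.
Lemma dPP i j : D' (P i) (P j) <= 1 + 1.
Proof. exact/gdist_le/(ball_trans (ePYw i) (eYwP j)). Qed.
Lemma dXX a b : D' (X a) (X b) <= d1 a b.
Proof. exact/gdist_le/bXX. Qed.
Lemma dYY a b : D' (Y a) (Y b) <= d2 a b.
Proof. exact/gdist_le/bYY. Qed.

Lemma cardV : #|V| = #|T1| + #|T2| + k.+1.
Proof. by rewrite card_sum card_sum card_option card_ord. Qed.

Lemma T1pos : 0 < #|T1|. Proof. by apply/card_gt0P; exists u. Qed.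

Notation E := (ecc G).
Notation E' := (ecc G').
Notation e2w := (ecc e2 w).

Lemma EV_lb : 2 + e2w <= E Vv.
Proof.
suff H : e2w <= E Vv - 2.
  suff : 2 <= E Vv by lia.
  have [y Hy] : exists y, y != w.
    have /card_gt1P [x [y [_ _ Hxy]]] := HT2.
    by case: (eqVneq x w) => [Hxw|Hx]; [exists y; rewrite -Hxw eq_sym | exists x].
  have := gdist_ecc G Vv (Y y).
  have := gdist_max e2 w y.
  case: (ltnP (D Vv (Y y)) #|V|) => Hl.
    by have := lip_gdist hV_lip Hl => /=; lia.
  by rewrite cardV in Hl; have := T1pos; lia.
apply: ecc_le => y.
have := gdist_ecc G Vv (Y y); have := conn_lt w y C2.
case: (ltnP (D Vv (Y y)) #|V|) => Hl.
  by have := lip_gdist hV_lip Hl => /=; lia.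
by rewrite cardV in Hl; have := T1pos; lia.
Qed.

Lemma EP_lb i : 3 <= E (P i).
Proof.
have := gdist_ecc G (P i) (Y w).
case: (ltnP (D (P i) (Y w)) #|V|) => Hl.
  by have := lip_gdist (hP_lip i) Hl => /=; rewrite eqxx gdist_xx; lia.
by rewrite cardV in Hl; have := T1pos; lia.
Qed.

Lemma e2w_pos : 1 <= e2w.
Proof.
have /card_gt1P [x [y [_ _ Hxy]]] := HT2.
have [z Hz] : exists z, w != z.
  by case: (eqVneq x w) => [Hxw|Hx]; [exists y; rewrite -Hxw | exists x; rewrite eq_sym].
exact: leq_trans (@gdist_pos _ e2 _ _ Hz) (gdist_ecc e2 w z).
Qed.

Lemma EW'_ub : E' (Y w) <= 1 + e2w.
Proof.
apply: ecc_le => -[[x|y]|[i|]].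
- apply: leq_trans (dYX w x) _; rewrite gdist_xx; have := gdist_ecc e1 u x; lia.
- apply: leq_trans (dYY w y) _; have := gdist_ecc e2 w y; lia.
- apply: leq_trans (dYP w i) _; rewrite gdist_xx; lia.
- apply: leq_trans (dYV w) _; rewrite gdist_xx; have := e2w_pos; lia.
Qed.

Lemma ecc_cmp x : E' x <= E x.
Proof.
apply: ecc_le => z; case: x => [[a|c]|[i|]].
- apply: leq_trans (gdist_ecc G _ z).
  apply: (cmp_gdist (hX_lip a)); first by rewrite /= gdist_xx.
  case: z => [[b|y]|[j|]] /=; [exact: dXX | exact: dXY | apply: leq_trans (dXP a j) _; lia | exact: dXV].
- apply: leq_trans (gdist_ecc G _ z).
  apply: (cmp_gdist (hY_lip c)); first by rewrite /= gdist_xx.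
  case: z => [[b|y]|[j|]] /=; [exact: dYX | exact: dYY | | apply: leq_trans (dYV c) _; lia].
  by apply: leq_trans (dYP c j) _; lia.
- case: z => [[b|y]|[j|]].
  + apply: leq_trans (gdist_ecc G _ _); apply: (cmp_gdist (hP_lip i)); first by rewrite /= eqxx.
    by apply: leq_trans (dPX i b) _; rewrite /=; lia.
  + apply: leq_trans (gdist_ecc G _ _); apply: (cmp_gdist (hP_lip i)); first by rewrite /= eqxx.
    by apply: leq_trans (dPY i y) _; rewrite /=; lia.
  + case: (eqVneq j i) => [->|Hji]; first by rewrite gdist_xx.
    apply: leq_trans (gdist_ecc G _ _); apply: (cmp_gdist (hP_lip i)); first by rewrite /= eqxx.
    by rewrite /= (negbTE Hji); exact: dPP.
  + exact: leq_trans (dPV i) (EP_lb i).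
- case: z => [[b|y]|[j|]].
  + apply: leq_trans (gdist_ecc G _ _); apply: (cmp_gdist hV_lip) => //; exact: dVX.
  + apply: leq_trans (gdist_ecc G _ _); apply: (cmp_gdist hV_lip) => //; apply: leq_trans (dVY y) _; rewrite /=; lia.
  + apply: leq_trans (dVP j) (leq_trans _ EV_lb); have := e2w_pos; lia.
  + by rewrite gdist_xx.
Qed.

Lemma E'_pos x : 0 < E' x.
Proof.
pose i0 : 'I_k := Ordinal Hk.
have [z Hz] : exists z, x != z.
  by case: x => [a|[i|]]; [exists Vv | exists Vv | exists (P i0)].
exact: leq_trans (@gdist_pos _ G' _ _ Hz) (gdist_ecc G' x z).
Qed.

Definition pend (y : V) : bool := if y is inr (Some _) then true else false.
Notation pS := [set y : V | pend y].

Lemma pS_pos : 0 < #|pS|.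
Proof. by apply/card_gt0P; exists (P (Ordinal Hk)); rewrite inE. Qed.

Lemma degP (hub : V) i : pend hub = false -> #|[set y | @cedge T1 T2 e1 e2 k u w hub (P i) y]| = 1.
Proof.
move=> Hh; rewrite -(cards1 hub); apply: eq_card => y; rewrite !inE.
case: y => [[b|b]|[j|]] //=.
by case: hub Hh => [[?|?]|[?|]].
Qed.

Lemma deg_eq x : x != Vv -> x != Y w -> deg G' x = deg G x.
Proof.
case: x => [[a|c]|[i|]] H1 Hw.
- by rewrite /deg; apply: eq_card => y; rewrite !inE; case: y => [[b|b]|[j|]].
- rewrite /deg; apply: eq_card => y; rewrite !inE; case: y => [[b|b]|[j|]] //=.
  by rewrite (negbTE Hw).
- by rewrite /deg /G_edge /G_moved_edge !degP.
- by rewrite eqxx in H1.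
Qed.

Lemma deg_W : deg G' (Y w) = deg G (Y w) + #|pS|.
Proof.
rewrite /deg.
have -> : [set y | G' (Y w) y] = [set y | G (Y w) y] :|: pS.
  by apply/setP => y; rewrite !inE; case: y => [[b|b]|[j|]] //=; rewrite ?eqxx ?orbF.
rewrite cardsU; suff -> : [set y | G (Y w) y] :&: pS = set0 by rewrite cards0 subn0.
by apply/setP => y; rewrite !inE; case: y => [[b|b]|[j|]] //=; rewrite andbF.
Qed.

Lemma deg_V : deg G Vv = deg G' Vv + #|pS|.
Proof.
rewrite /deg.
have -> : [set y | G Vv y] = [set y | G' Vv y] :|: pS.
  by apply/setP => y; rewrite !inE; case: y => [[b|b]|[j|]] //=; rewrite ?eqxx ?orbF.
rewrite cardsU; suff -> : [set y | G' Vv y] :&: pS = set0 by rewrite cards0 subn0.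
by apply/setP => y; rewrite !inE; case: y => [[b|b]|[j|]] //=; rewrite andbF.
Qed.

Lemma divle (n a b : nat) : 0 < a -> a <= b -> (n%:R / b%:R <= n%:R / a%:R :> rat)%R.
Proof.
move=> Ha Hab; apply: ler_wpM2l; first by rewrite ler0n.
rewrite lef_pV2 ?posrE ?ltr0n ?ler_nat //; lia.
Qed.

Lemma divlt (n a b : nat) : 0 < n -> 0 < a -> a < b -> (n%:R / b%:R < n%:R / a%:R :> rat)%R.
Proof.
move=> Hn Ha Hab; rewrite ltr_pM2l ?ltr0n //.
rewrite ltf_pV2 ?posrE ?ltr0n ?ltr_nat //; lia.
Qed.

Lemma split2 (F : V -> rat) :
  (\sum_x F x = F Vv + (F (Y w) + \sum_(x | (x != Vv) && (x != Y w)) F x))%R.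
Proof. by rewrite (bigD1 Vv) //= (bigD1 (Y w)). Qed.

Lemma main : (xi_ee G < xi_ee G')%R.
Proof.
rewrite /xi_ee !split2.
have Hr : (\sum_(x | (x != Vv) && (x != Y w)) (deg G x)%:R / (E x)%:R <=
           \sum_(x | (x != Vv) && (x != Y w)) (deg G' x)%:R / (E' x)%:R :> rat)%R.
  apply: ler_sum => x /andP [H1 H2]; rewrite deg_eq //.
  exact: divle (E'_pos x) (ecc_cmp x).
have h1 := divle (deg G' Vv) (E'_pos Vv) (ecc_cmp Vv).
have h3 := divle (deg G (Y w)) (E'_pos (Y w)) (ecc_cmp (Y w)).
have h2 : (#|pS|%:R / (E Vv)%:R < #|pS|%:R / (E' (Y w))%:R :> rat)%R.
  apply: divlt pS_pos (E'_pos _) _; have := EW'_ub; have := EV_lb; lia.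
rewrite deg_V deg_W !natrD !mulrDl.
lra.
Qed.
End Spec.

Theorem theorem3p5 (T1 T2 : finType) (e1 : rel T1) (e2 : rel T2)
  (u : T1) (w : T2) (k : nat) :
  simple_graph e1 -> connected_graph e1 ->
  simple_graph e2 -> connected_graph e2 ->
  1 < #|T2| -> 1 <= k ->
  ecc e1 u <= ecc e2 w ->
  (xi_ee (@G_edge T1 T2 e1 e2 k u w) < xi_ee (@G_moved_edge T1 T2 e1 e2 k u w))%R.
Proof.
move=> _ C1 _ C2 HT2 Hk He.
exact: main.
Qed.
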